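(* In the FIND setting of the context, fix a leaf cluster $\mathcal C_r$ and a consistent ordering of $\mathcal T_r^+$. If $\mathcal C_i$ is a child of $\mathcal C_k$ in $\mathcal T_r^+$, then $\boldsymbol\Sigma_k(\mathcal B_i,\mathcal B_i)=\boldsymbol\Sigma_{i+}(\mathcal B_i,\mathcal B_i)$.
   Context: Setting (FIND). $\mathcal M$ is a finite set of mesh nodes; $\mathbf A$ is an invertible complex matrix indexed by $\mathcal M\times\mathcal M$, structurally symmetric ($A_{ij}\neq0\iff A_{ji}\neq0$); distinct nodes $i,j$ are connected if $A_{ij}\neq 0$. $\boldsymbol\Sigma$ is a complex matrix indexed by $\mathcal M\times\mathcal M$ with $\Sigma_{ij}=0$ whenever $i\neq j$ and $i,j$ are not connected. $\dagger$ is conjugate transpose, $\mathbf X^{-\dagger}=(\mathbf X^{-1})^\dagger$. $\mathbf X(X,Y)$ is the submatrix with rows in $X$, columns in $Y$. For a cluster $\mathcal C\subseteq\mathcal M$: boundary set $\mathcal B_{\mathcal C}=\{i\in\mathcal C: A_{ij}\neq 0\text{ for some } j\notin\mathcal C\}$, inner set $\mathcal I_{\mathcal C}=\mathcal C\setminus\mathcal B_{\mathcal C}$; for $\mathcal C_g$ write $\mathcal B_g,\mathcal I_g$. Cluster tree: $\mathcal T$ is a rooted binary tree of clusters with root $\mathcal M$, each non-leaf cluster the disjoint union of its two children. For a leaf $\mathcal C_r$ with path $r=a_0,\dots,a_d$ (root) and $b_k$ the sibling of $a_k$, the augmented tree $\mathcal T_r^+$ has root $\mathcal C_{-r}=\mathcal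 M\setminus\mathcal C_r$; for $0\le k\le d-2$, $\mathcal C_{-a_k}=\mathcal M\setminus\mathcal C_{a_k}$ has children $\mathcal C_{b_k}$ and $\mathcal C_{-a_{k+1}}$, with $\mathcal C_{-a_{d-1}}$ identified with $\mathcal C_{b_{d-1}}$; each basic cluster $\mathcal C_{b_k}$ carries its subtree from $\mathcal T$. Private inner nodes: $\mathcal S_g=\mathcal I_g$ for a leaf $g$ of $\mathcal T_r^+$; $\mathcal S_g=\mathcal I_g\setminus(\mathcal I_i\cup\mathcal I_j)$ if $g$ has children $i,j$. Consistent ordering: a total order $g_1,\dots,g_m$ of the nodes of $\mathcal T_r^+$ with every node after all its descendants. Elimination: $\mathbf A_{g_1}=\mathbf A$, $\boldsymbol\Sigma_{g_1}=\boldsymbol\Sigma$; for each $g$ (with $\mathbf A_g(\mathcal S_g,\mathcal S_g)$ invertible), $\mathcal L_g=\mathbf A_g(\mathcal B_g,\mathcal S_g)\mathbf A_g(\mathcal S_g,\mathcal S_g)^{-1}$, $\mathbf L_g$ is the identity on $\mathcal M$ except $\mathbf L_g(\mathcal B_g,\mathcal S_g)=\mathcal L_g$, $\mathbf A_{g+}=\mathbf L_g^{-1}\mathbf A_g$, $\boldsymbol\Sigma_{g+}=\mathbf L_g^{-1}\boldsymbol\Sigma_g\mathbf L_g^{-\dagger}$, and $\mathbf A_{g_{t+1}}=\mathbf A_{g_t+}$, $\boldsymbol\Sigma_{g_{t+1}}=\boldsymbol\Sigma_{g_t+}$. Thus $\boldsymbol\Sigma_k$ is the matrix just before, and $\boldsymbol\Sigma_{k+}$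 just after, eliminating $\mathcal S_k$. *)

(* Defs.v *)
From HB Require Import structures.
From mathcomp Require Import all_boot all_order all_algebra.
From mathcomp Require Import reals complex.
Set Implicit Arguments. Unset Strict Implicit. Unset Printing Implicit Defensive.
Import Order.TTheory GRing.Theory Num.Theory.
Local Open Scope ring_scope.

(* Mesh nodes are 'I_n; complex matrices indexed by M x M are 'M[R[i]]_n. *)

Section Matrices.
Variables (R : realType) (n : nat).
Local Notation C := (R[i]).
Local Notation mat := ('M[C]_n).

Definition ctrmx (X : mat) : mat := \matrix_(i, j) conjc (X j i).

Definition connected (A : mat) (i j : 'I_n) : bool := (i != j) && (A i j != 0).

Definition struct_symmetric (A : mat) : Prop :=
  forall i j, (A i j != 0) = (A j i != 0).

Definition sigma_sparsity (A Sigma : mat) : Prop :=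
  forall i j, i != j -> ~~ connected A i j -> Sigma i j = 0.

Definition bnd (A : mat) (Cl : {set 'I_n}) : {set 'I_n} :=
  [set i in Cl | [exists j, (j \notin Cl) && (A i j != 0)]].
Definition inner (A : mat) (Cl : {set 'I_n}) : {set 'I_n} := Cl :\: bnd A Cl.

Definition subSS (X : mat) (S : {set 'I_n}) : 'M[C]_#|S| :=
  \matrix_(a, b) X (enum_val a) (enum_val b).

(* L_g : identity except L_g(B,S) = X(B,S) X(S,S)^{-1} *)
Definition Lmat (X : mat) (B S : {set 'I_n}) : mat :=
  \matrix_(i, j)
    if (i \in B) && (j \in S) then
      \sum_(a < #|S|) \sum_(b < #|S| | enum_val b == j)
          X i (enum_val a) * (invmx (subSS X S)) a b
    else (i == j)%:R.
End Matrices.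

(* Binary cluster trees.  A node is addressed by its position: the list of
   directions (false = left child, true = right child) from the root.   *)

Inductive ctree (T : finType) :=
  | CLeaf of {set T}
  | CNode of {set T} & ctree T & ctree T.
Arguments CLeaf {T}.
Arguments CNode {T}.

Section Trees.
Variable T : finType.

Definition cl (t : ctree T) : {set T} :=
  match t with CLeaf C => C | CNode C _ _ => C end.

Fixpoint wf_ctree (t : ctree T) : Prop :=
  match t with
  | CLeaf _ => True
  | CNode C l r => C = cl l :|: cl r /\ [disjoint cl l & cl r] /\
                   wf_ctree l /\ wf_ctree r
  end.

Definition cluster_tree (t : ctree T) : Prop := wf_ctree t /\ cl t = setT.

Fixpoint subtree_at (t : ctree T) (q : seq bool) : option (ctree T) :=
  match q with
  | [::] => Some t
  | b :: q' => match t with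
               | CLeaf _ => None
               | CNode _ l r => subtree_at (if b then r else l) q'
               end
  end.

Definition is_node (t : ctree T) (q : seq bool) : bool :=
  if subtree_at t q is Some _ then true else false.

Definition is_leaf (t : ctree T) (q : seq bool) : bool :=
  if subtree_at t q is Some (CLeaf _) then true else false.

Definition cl_at (t : ctree T) (q : seq bool) : {set T} :=
  if subtree_at t q is Some u then cl u else set0.

Definition is_child (t : ctree T) (i k : seq bool) : Prop :=
  is_node t k /\ is_node t i /\ exists b, i = rcons k b.

(* Augmented tree T_r^+ for the leaf at position p.  [aug_rec acc u q]:
   acc is the tree of C_{-a} where a is the node u (reached so far);
   descending from u to its child a' on the path, with sibling s, the
   tree of C_{-a'} = M \ C_{a'} has children C_s (with its subtree) and
   C_{-a}.  At the root's child a_{d-1}, C_{-a_{d-1}} is identified with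
   the sibling C_{b_{d-1}} (with its subtree). *)
Fixpoint aug_rec (acc : ctree T) (u : ctree T) (q : seq bool) : ctree T :=
  match q, u with
  | b :: q', CNode _ l r =>
      let a := if b then r else l in
      let s := if b then l else r in
      aug_rec (CNode (~: cl a) s acc) a q'
  | _, _ => acc
  end.

Definition aug (t : ctree T) (p : seq bool) : ctree T :=
  match p, t with
  | b :: p', CNode _ l r =>
      let a := if b then r else l in
      let s := if b then l else r in
      aug_rec s a p'
  | _, _ => CLeaf (~: cl t)  (* degenerate case d = 0: C_{-r} = M \ M *)
  end.

Definition consistent_ordering (t : ctree T) (s : seq (seq bool)) : Prop :=
  [/\ uniq s,
      forall q, (q \in s) = is_node t q &
      forall q q', q' != [::] -> is_node t (q ++ q') ->
        index (q ++ q') s < index q s]%N.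
End Trees.

Section Elimination.
Variables (R : realType) (n : nat).
Local Notation C := (R[i]).
Local Notation mat := ('M[C]_n).
Variable A : mat.   (* the original matrix: defines boundary/inner sets *)

Definition priv (t : ctree 'I_n) (g : seq bool) : {set 'I_n} :=
  match subtree_at t g with
  | Some (CLeaf Cg) => inner A Cg
  | Some (CNode Cg l r) => inner A Cg :\: (inner A (cl l) :|: inner A (cl r))
  | None => set0
  end.

Definition elim_step (t : ctree 'I_n) (st : mat * mat) (g : seq bool) : mat * mat :=
  let X := st.1 in let Sg := st.2 in
  let L := Lmat X (bnd A (cl_at t g)) (priv t g) in
  (invmx L *m X, invmx L *m Sg *m ctrmx (invmx L)).

Definition elim_state (Sigma : mat) (t : ctree 'I_n) (s : seq (seq bool)) (m : nat)
  : mat * mat := foldl (elim_step t) (A, Sigma) (take m s).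

Definition A_before Sigma t s g := (elim_state Sigma t s (index g s)).1.
Definition Sigma_before Sigma t s g := (elim_state Sigma t s (index g s)).2.
Definition Sigma_after Sigma t s g := (elim_state Sigma t s (index g s).+1).2.

Definition elim_invertible (Sigma : mat) (t : ctree 'I_n) (s : seq (seq bool)) : Prop :=
  forall g, g \in s -> subSS (A_before Sigma t s g) (priv t g) \in unitmx.
End Elimination.

(* Main.v *)
Require Import Defs.
From HB Require Import structures.
From mathcomp Require Import all_boot all_order all_algebra.
From mathcomp Require Import reals complex.
Local Open Scope ring_scope.
Import GRing.Theory.

Section Aux.
Variable T : finType.

Lemma cl_at_sub (t : ctree T) q : wf_ctree t -> cl_at t q \subset cl t.
Proof.
elim: t q => [C|C l IHl r IHr] [|b q] //=.
- by rewrite /cl_at /= sub0set.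
- move=> [-> [_ [wl wr]]].
  case: b.
  + exact: subset_trans (IHr q wr) (subsetUr _ _).
  + exact: subset_trans (IHl q wl) (subsetUl _ _).
Qed.

Lemma cl_at_cons C (l r : ctree T) b q :
  cl_at (CNode C l r) (b :: q) = cl_at (if b then r else l) q.
Proof. by []. Qed.

Lemma disj_pos (t : ctree T) g i : wf_ctree t -> is_node t g -> is_node t i ->
  (forall q, i <> g ++ q) -> (forall q, g <> i ++ q) ->
  [disjoint cl_at t g & cl_at t i].
Proof.
elim: t g i => [C|C l IHl r IHr] g i.
  move=> _; case: g => [|b g] //= _ _ H; by case: (H i).
case: g => [|b g]; first by move=> _ _ _ H; case: (H i).
case: i => [|c i]; first by move=> _ _ _ _ H; case: (H (b :: g)).
move=> [eC [dlr [wl wr]]] ng ni H1 H2.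
rewrite !cl_at_cons.
case: b c ng ni H1 H2 => [] [] ng ni H1 H2.
- apply: IHr => // q E; [apply: (H1 q) | apply: (H2 q)]; by rewrite E.
- apply: disjointWl (cl_at_sub r g wr) _; rewrite disjoint_sym.
  exact: disjointWl (cl_at_sub l i wl) dlr.
- apply: disjointWl (cl_at_sub l g wl) _; rewrite disjoint_sym.
  by apply: disjointWl (cl_at_sub r i wr) _; rewrite disjoint_sym.
- apply: IHl => // q E; [apply: (H1 q) | apply: (H2 q)]; by rewrite E.
Qed.

Lemma wf_aug_rec (acc u : ctree T) q : wf_ctree acc -> wf_ctree u ->
  cl acc = ~: cl u -> wf_ctree (aug_rec acc u q).
Proof.
elim: q acc u => [|b q IH] acc [C|C l r] //= wa wu ea.
move: wu => [eC [dlr [wl wr]]].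
apply: IH => //=; last by case: b.
split; last split; last split => //; last by case: b.
- rewrite ea eC; apply/setP => x; rewrite !inE.
  case: b => /=.
  + case hl: (x \in cl l); case hr: (x \in cl r) => //=.
    by rewrite (disjointFr dlr hl) in hr.
  + case hl: (x \in cl l); case hr: (x \in cl r) => //=.
    by rewrite (disjointFr dlr hl) in hr.
- rewrite ea eC disjoints_subset setCK; case: b; [exact: subsetUl|exact: subsetUr].
Qed.

Lemma wf_aug (t : ctree T) p : cluster_tree t -> wf_ctree (aug t p).
Proof.
move=> [wt ct]; case: p => [|b p]; case: t wt ct => [C|C l r] //= wt ct.
move: wt => [eC [dlr [wl wr]]].
apply: wf_aug_rec; first by case: b.
  by case: b.
rewrite ct in eC.
case: b => /=; apply/setP => x; move/setP: eC => /(_ x); rewrite !inE;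
  case hl: (x \in cl l); case hr: (x \in cl r) => //=;
  by rewrite (disjointFr dlr hl) in hr.
Qed.
End Aux.

Section Step.
Variables (R : realType) (n : nat).

Lemma delta_sum (F : 'I_n -> R[i]) x : \sum_c (x == c)%:R * F c = F x.
Proof.
rewrite (bigD1 x) //= eqxx mul1r big1 ?addr0 // => c hc.
by rewrite eq_sym (negbTE hc) mul0r.
Qed.

Lemma Lrow (X : 'M[R[i]]_n) (B S : {set 'I_n}) (x a : 'I_n) : x \notin B ->
  invmx (Lmat X B S) x a = (x == a)%:R.
Proof.
move=> hx.
have Lx : forall c, Lmat X B S x c = (x == c)%:R.
  by move=> c; rewrite /Lmat mxE (negbTE hx).
case: (boolP (Lmat X B S \in unitmx)) => hu.
- have := mulmxV hu; move/matrixP => /(_ x a); rewrite !mxE.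
  under eq_bigr do rewrite Lx.
  by rewrite delta_sum.
- by rewrite invmx_out ?inE // Lx.
Qed.

Lemma step_keep (A : 'M[R[i]]_n) t st g x y :
  x \notin bnd A (cl_at t g) -> y \notin bnd A (cl_at t g) ->
  (elim_step A t st g).2 x y = st.2 x y.
Proof.
move=> hx hy; rewrite /elim_step /= !mxE.
under eq_bigr do rewrite !mxE (Lrow _ _ _ _ _ hy).
under eq_bigr => b _.
  under eq_bigr do rewrite (Lrow _ _ _ _ _ hx).
  rewrite delta_sum.
over.
rewrite /=.
transitivity (\sum_b (y == b)%:R * st.2 x b).
  by apply: eq_bigr => b _; rewrite rmorph_nat mulrC.
by rewrite delta_sum.
Qed.
End Step.

Theorem corollary2 (R : realType) (n : nat) (A Sigma : 'M[R[i]]_n)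
    (T : ctree 'I_n) (p : seq bool) (Cr : {set 'I_n})
    (s : seq (seq bool)) (i k : seq bool) :
  A \in unitmx ->
  struct_symmetric A ->
  sigma_sparsity A Sigma ->
  cluster_tree T ->
  subtree_at T p = Some (CLeaf Cr) ->
  consistent_ordering (aug T p) s ->
  elim_invertible A Sigma (aug T p) s ->
  is_child (aug T p) i k ->
  forall x y, x \in bnd A (cl_at (aug T p) i) -> y \in bnd A (cl_at (aug T p) i) ->
    Sigma_before A Sigma (aug T p) s k x y = Sigma_after A Sigma (aug T p) s i x y.
Proof.
move=> _ _ _ cT _ [Hu Hmem Hord] _ [nk [ni [b Ei]]] x y Hx Hy.
have wft := @wf_aug _ T p cT.

set t := aug T p in wft Hmem Hord nk ni Hx Hy *.
have ki : (index i s < index k s)%N.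
  by rewrite Ei -cats1; apply: Hord => //; rewrite cats1 -Ei.
have ks : (index k s < size s)%N by rewrite index_mem Hmem.
set mi := index i s in ki *; set mk := index k s in ki ks *.
have notb : forall j z, (mi < j)%N -> (j < mk)%N ->
    z \in bnd A (cl_at t i) -> z \notin bnd A (cl_at t (nth [::] s j)).
  move=> j z h1 h2 hz.
  have js : (j < size s)%N by apply: ltn_trans ks.
  set g := nth [::] s j.
  have gs : g \in s by apply: mem_nth.
  have ig : index g s = j by apply: index_uniq.
  have dj : [disjoint cl_at t g & cl_at t i].
    apply: disj_pos => //; first by rewrite -Hmem.
    + move=> q E; case/lastP: q E => [|q0 c] E.
        by move: h1; rewrite /mi E cats0 ig ltnn.
      move: E; rewrite Ei -rcons_cat => /rcons_inj [Ek _].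
      case: (eqVneq q0 [::]) => [E0|ne].
        by move: h2; rewrite /mk Ek E0 cats0 ig ltnn.
      have := Hord g q0 ne; rewrite -Ek => /(_ nk).
      by rewrite -/mk ig => /(ltn_trans h2); rewrite ltnn.
    + move=> q E; case: (eqVneq q [::]) => [E0|ne].
        by move: h1; rewrite /mi -ig E E0 cats0 ltnn.
      have := Hord i q ne; rewrite -E -Hmem => /(_ gs).
      by rewrite ig => /(ltn_trans h1); rewrite ltnn.
  apply/negP => hg.
  move: hz; rewrite inE => /andP [hz _].
  move: hg; rewrite inE => /andP [hg _].
  by rewrite (disjointFl dj hz) in hg.
rewrite /Sigma_before /Sigma_after /elim_state -/mi -/mk.
have key : forall d, (mi.+1 + d <= mk)%N ->
   (foldl (elim_step A t) (A, Sigma) (take (mi.+1 + d) s)).2 x y =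
   (foldl (elim_step A t) (A, Sigma) (take mi.+1 s)).2 x y.
  elim => [|d IH] hd; first by rewrite addn0.
  have hd' : (mi.+1 + d < mk)%N by rewrite -addnS.
  rewrite addnS (take_nth [::]); last by apply: ltn_trans ks.
  rewrite -cats1 foldl_cat /= step_keep.
  - by apply: IH; apply: ltnW.
  - by apply: notb => //; rewrite ltnS leq_addr.
  - by apply: notb => //; rewrite ltnS leq_addr.
have := key (mk - mi.+1)%N; rewrite subnKC // leqnn; by apply.

Qed.
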